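(* Let $\mathcal F$ be a proper filter on $\omega$. Then $\mathcal F$ is a non-meager P-filter if and only if every $\mathcal F$-tree of finite sets has a branch whose union belongs to $\mathcal F$.
   Context: A filter on $\omega$ is a family $\mathcal F\subseteq\mathcal P(\omega)$ closed under finite intersections and supersets and containing all cofinite sets; it is proper if all its members are infinite. $\mathcal P(\omega)$ is identified with $2^\omega$ via characteristic functions, with the product topology of the discrete space $\{0,1\}$; ''meager'' refers to this topology. $X\subseteq^* Y$ means $X\setminus Y$ is finite. $\mathcal F$ is a P-filter if for every sequence $\langle X_n:n\in\omega\rangle\subseteq\mathcal F$ there is $X\in\mathcal F$ with $X\subseteq^* X_n$ for all $n$. Let $[\omega]^{<\omega}$ denote the set of finite subsets of $\omega$. A tree of finite sets is a set $T$ of finite sequences of elements of $[\omega]^{<\omega}$ containing the empty sequence and closed under initial segments; it is an $\mathcal F$-tree of finite sets if for each $\bar s\in T$ there is $X_{\bar s}\in\mathcal F$ such that $\bar s^\frown a\in T$ for every finite $a\subseteq X_{\bar s}$. A branch is an infinite sequence $\langle s_k:k\in\omega\rangle$ all of whose finite initial segments lie in $T$; its union is $\bigcup_k s_k$. *)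

(* Defs.v *)
From HB Require Import structures.
From mathcomp Require Import all_boot all_order finmap.
From mathcomp Require Import all_classical all_reals topology cantor.
Set Implicit Arguments. Unset Strict Implicit. Unset Printing Implicit Defensive.
Local Open Scope classical_set_scope.

Definition is_filter (F : set (set nat)) : Prop :=
  (forall X Y, F X -> F Y -> F (X `&` Y)) /\
  (forall X Y, F X -> X `<=` Y -> F Y) /\
  (forall X, finite_set (~` X) -> F X).

Definition proper_filter (F : set (set nat)) : Prop :=
  is_filter F /\ (forall X, F X -> infinite_set X).

Definition almost_subset (X Y : set nat) : Prop := finite_set (X `\` Y).

Definition P_filter (F : set (set nat)) : Prop :=
  forall Xs : nat -> set nat, (forall n, F (Xs n)) ->
    exists X, F X /\ forall n, almost_subset X (Xs n).

(* P(omega) identified with 2^omega (Cantor space, product of discrete {0,1})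
   via characteristic functions. *)
Definition chi (X : set nat) : cantor_space := fun n => `[< X n >].

Definition nowhere_dense (T : topologicalType) (A : set T) : Prop :=
  interior (closure A) = set0.

Definition meager (T : topologicalType) (A : set T) : Prop :=
  exists N : nat -> set T, (forall n, nowhere_dense (N n)) /\
    A `<=` \bigcup_n N n.

Definition meager_family (F : set (set nat)) : Prop := meager (chi @` F).

Definition tree_of_finsets (T : set (seq {fset nat})) : Prop :=
  T [::] /\ (forall s t, T (s ++ t) -> T s).

Definition F_tree (F : set (set nat)) (T : set (seq {fset nat})) : Prop :=
  tree_of_finsets T /\
  forall s, T s -> exists X, F X /\
    forall a : {fset nat}, (forall x, x \in a -> X x) -> T (rcons s a).

Definition branch (T : set (seq {fset nat})) (b : nat -> {fset nat}) : Prop :=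
  forall n, T (mkseq b n).

Definition branch_union (b : nat -> {fset nat}) : set nat :=
  [set m | exists k, m \in b k].

(* Main.v *)
Require Import Defs.
From mathcomp Require Import all_boot finmap.
From mathcomp Require Import all_classical topology cantor.
Set Implicit Arguments. Unset Strict Implicit. Unset Printing Implicit Defensive.
Local Open Scope classical_set_scope.

Definition agree (x : cantor_space) (L : nat) : set cantor_space :=
  [set z | forall i, i < L -> z i = x i].

Lemma agree_nbhs x L : nbhs x (agree x L).
Proof.
elim: L => [|L IH]; first by apply: (filterS _ (@filterT cantor_space (nbhs x) _)) => z _ i; rewrite ltn0.
have h : nbhs x (proj L @^-1` [set x L] : set cantor_space).
  exists (proj L @^-1` [set x L]); split => //.
  suff : @open cantor_space (proj L @^-1` [set x L]) by [].
  apply: open_comp; [move=> + _; exact: proj_continuous| apply: discrete_open].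
apply: filterS (filterI IH h).
move=> z [h1 h2] i; rewrite ltnS leq_eqVlt => /predU1P[->|]; last exact: h1.
exact: h2.
Qed.

Lemma nbhs_agree x A : nbhs x A -> exists L, agree x L `<=` A.
Proof.
pose G := filter_from [set: nat] (agree x).
have GF : Filter G.
  apply: filter_from_filter; first by exists 0.
  move=> i j _ _; exists (maxn i j) => //; move=> z hz; split => k hk; apply: hz.
    by rewrite (leq_trans hk) // leq_maxl.
  by rewrite (leq_trans hk) // leq_maxr.
have : G --> (x : cantor_space).
  apply/cvg_sup => N U [V] [[W] oW <-] WfN WU.
  by exists N.+1 => // z hz; apply: WU => /=; rewrite (hz N).
by move=> /(_ A) H /H [L _ h]; exists L.
Qed.

Lemma nd_avoid (N : set cantor_space) : nowhere_dense N -> forall x L,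
  exists p : nat * cantor_space, L <= p.1 /\ (forall i, i < L -> p.2 i = x i) /\
    forall z, (forall i, i < p.1 -> z i = p.2 i) -> ~ N z.
Proof.
move=> hN x L.
have [y [hy ny]] : exists y, agree x L y /\ ~ closure N y.
  apply/not_existsP => hc.
  have : (interior (closure N)) x.
    apply: filterS (agree_nbhs x L) => y hy.
    by have := hc y; move/not_andP => [//|/contrapT].
  by rewrite hN.
have [B [hB hNB]] : exists B, nbhs y B /\ ~ (N `&` B !=set0).
  by apply/not_existsP => hc; apply: ny => B hB; have := hc B; move/not_andP => [//|/contrapT].
have [L1 hL1] := nbhs_agree hB.
exists (maxn L L1, y); split; first exact: leq_maxl.
split; first exact: hy.
move=> z hz Nz; apply: hNB; exists z; split => //; apply: hL1 => i hi.
by apply: hz; rewrite (leq_trans hi) // leq_maxr.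
Qed.

Lemma mono_ge (nn : nat -> nat) : (forall j, nn j < nn j.+1) -> forall j, j <= nn j.
Proof. move=> h; elim => // j IH; exact: leq_ltn_trans IH (h j). Qed.

Lemma mono_le (nn : nat -> nat) : (forall j, nn j < nn j.+1) -> forall i j, i <= j -> nn i <= nn j.
Proof.
move=> h i j /subnK <-; elim: (j - i) => // k IH.
by rewrite addSn (leq_trans IH) // ltnW.
Qed.

Lemma nonmeager_blocks (F : set (set nat)) (nn : nat -> nat) :
  (forall j, nn j < nn j.+1) -> ~ meager_family F ->
  exists W, F W /\ forall j0, exists j, j0 <= j /\ forall i, nn j <= i < nn j.+1 -> ~ W i.
Proof.
move=> hmono nmF; apply/not_existsP => hc; apply: nmF.
pose N j0 := [set z : cantor_space | forall j, j0 <= j -> exists i, nn j <= i < nn j.+1 /\ z i].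
exists N; split.
  move=> j0; apply/seteqP; split => // x hx; exfalso.
  have [L hL] := nbhs_agree hx.
  pose j := maxn j0 L.
  pose y : cantor_space := fun i => if i < L then x i else false.
  have hy : closure (N j0) y by apply: hL => i hi; rewrite /y hi.
  have [z [Nz hz]] := hy _ (agree_nbhs y (nn j.+1)).
  have [i [/andP [hi1 hi2] zi]] := Nz j (leq_maxl _ _).
  move: zi; rewrite hz // /y.
  have -> : (i < L) = false.
    apply/negbTE; rewrite -leqNgt (leq_trans _ hi1) //.
    exact: leq_trans (leq_maxr j0 L) (mono_ge hmono j).
  by [].
move=> _ [W FW <-].
have := hc W; move/not_andP => [//|].
move/existsNP => [j0 hj0]; exists j0 => //= j hj.
apply: contrapT => hn; apply: hj0; exists j; split => // i hi Wi.
by apply: hn; exists i; split => //; rewrite /chi asboolT.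
Qed.
Local Open Scope fset_scope.

Lemma fin_bound (A : set nat) M : (forall i, A i -> i < M) -> finite_set A.
Proof. by move=> h; apply: (sub_finite_set (B := `I_M)) => // i /h. Qed.

Lemma bound_fin (A : set nat) : finite_set A -> exists M, forall i, A i -> i < M.
Proof.
move/finite_fsetP => [X ->]; exists (\max_(i <- X) i).+1 => i /= hi.
by rewrite ltnS; exact: (@leq_bigmax_seq _ _ xpredT (fun j => j) i hi isT).
Qed.

Lemma fset_max (a : {fset nat}) i : i \in a -> i < (\max_(j <- a) j).+1.
Proof. by move=> hi; rewrite ltnS; exact: (@leq_bigmax_seq _ _ xpredT (fun j => j) i hi isT). Qed.

Lemma filt_ge F : is_filter F -> forall M, F [set i | M <= i].
Proof.
move=> [_ [_ hC]] M; apply: hC; apply: (fin_bound (M := M)) => i /=.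
by rewrite leqNgt => /negP /negbNE.
Qed.

Lemma filtT F : is_filter F -> F setT.
Proof. move=> hF; have [_ [hS _]] := hF; exact: hS (filt_ge hF 0) _. Qed.

Lemma tree_Pfilter F : proper_filter F ->
  (forall T, F_tree F T -> exists b, branch T b /\ F (branch_union b)) -> P_filter F.
Proof.
move=> [hF _] H Xs hXs.
have [hI [hS hC]] := hF.
pose XI n := [set i | forall m, m <= n -> Xs m i].
have FXI n : F (XI n).
  elim: n => [|n IH].
    by apply: hS (hXs 0) _ => i hi m; rewrite leqn0 => /eqP ->.
  apply: hS (hI _ _ IH (hXs n.+1)) _ => i [h1 h2] m.
  by rewrite leq_eqVlt => /predU1P[->//|]; rewrite ltnS; apply: h1.
pose T (s : seq {fset nat}) := forall k, k < size s -> forall i, i \in nth fset0 s k -> XI k i.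
have hT : F_tree F T.
  split; first split.
  - by move=> k.
  - move=> s t hst k hk i hi; apply: (hst k); first by rewrite size_cat ltn_addr.
    by rewrite nth_cat hk.
  move=> s hs; exists (XI (size s)); split => // a ha k.
  rewrite size_rcons ltnS leq_eqVlt => /predU1P[->|hk] i.
    by rewrite nth_rcons ltnn eqxx; apply: ha.
  by rewrite nth_rcons hk; apply: hs.
have [b [hb FY]] := H T hT.
exists (branch_union b); split => // n.
have hbk k i : i \in b k -> XI k i.
  move=> hi; apply: (hb k.+1 k); first by rewrite size_mkseq.
  by rewrite nth_mkseq.
pose M := \sum_(k < n) (\max_(j <- b k) j).+1.
apply: (fin_bound (M := M)) => i [[k hk] nX].
case: (ltnP k n) => hkn; last by exfalso; apply: nX; apply: (hbk k i hk).
apply: leq_trans (fset_max hk) _.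
rewrite /M (bigD1 (Ordinal hkn)) //=; exact: leq_addr.
Qed.

Lemma fset_unif (Q : {fset nat} -> nat -> Prop) :
  (forall a M M', M <= M' -> Q a M -> Q a M') -> (forall a, exists M, Q a M) ->
  forall n, exists M, forall a, (forall x, x \in a -> x < n) -> Q a M.
Proof.
move=> + + n; elim: n Q => [|n IH] Q hm hQ.
  have [M hM] := hQ fset0; exists M => a ha.
  suff -> : a = fset0 by [].
  apply/fsetP => x; rewrite inE; apply/negbTE/negP => /ha.
  by rewrite ltn0.
have [M1 hM1] := IH Q hm hQ.
have [M2 hM2] := IH (fun a M => Q (n |` a) M) (fun a => hm _) (fun a => hQ _).
exists (maxn M1 M2) => a ha.
case: (boolP (n \in a)) => hn.
  rewrite -(fsetD1K hn); apply: hm (leq_maxr _ _) _; apply: hM2 => x.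
  rewrite !inE => /andP [hx xa]; have := ha x xa.
  by rewrite ltnS leq_eqVlt (negbTE hx).
apply: hm (leq_maxl _ _) _; apply: hM1 => x xa; have := ha x xa.
rewrite ltnS leq_eqVlt => /predU1P[hx|//].
by move: hn; rewrite -hx xa.
Qed.

Lemma seq_unif (Q : seq {fset nat} -> nat -> Prop) :
  (forall s M M', M <= M' -> Q s M -> Q s M') -> (forall s, exists M, Q s M) ->
  forall j n : nat, exists M, forall s : seq {fset nat}, size s <= j ->
    (forall a : {fset nat}, a \in s -> forall x : nat, x \in a -> x < n) -> Q s M.
Proof.
move=> + + j n; elim: j Q => [|j IH] Q hm hQ.
  have [M hM] := hQ [::]; exists M => -[|a s] //.
have [M0 hM0] := hQ [::].
pose Q' a M := forall s, size s <= j ->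
    (forall a0 : {fset nat}, a0 \in s -> forall x : nat, x \in a0 -> x < n) -> Q (a :: s) M.
have [M1 hM1] : exists M, forall a, (forall x, x \in a -> x < n) -> Q' a M.
  apply: fset_unif.
    by move=> a M M' hMM' h s hs he; apply: hm hMM' (h s hs he).
  move=> a; have [M hM] := IH (fun s M => Q (a :: s) M) (fun s => hm _) (fun s => hQ _).
  by exists M.
exists (maxn M0 M1) => -[|a s] hs he; first by apply: hm (leq_maxl _ _) hM0.
apply: hm (leq_maxr _ _) _; apply: (hM1 a _ s hs).
  by apply: he; rewrite mem_head.
by move=> b bs; apply: he; rewrite inE bs orbT.
Qed.

Section St.
Variable Wf : nat * cantor_space * nat -> nat * cantor_space.
Definition stT := (nat * nat * cantor_space)%type.
Definition Aof (st : stT) := (Wf (st.1.1, st.2, st.1.2)).1.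
Definition Yof (st : stT) := (Wf (st.1.1, st.2, st.1.2)).2.
Definition step (st : stT) (a : {fset nat}) : stT :=
  (st.1.1.+1, maxn (maxn (Aof st) (st.1.2).+1) (\max_(j <- a) j).+1,
   fun i => if i < Aof st then Yof st i else i \in a).
Definition state (s : seq {fset nat}) := foldl step (0, 0, fun _ => false) s.
Definition Tm (s : seq {fset nat}) :=
  forall k, k < size s -> forall i, i \in nth fset0 s k -> Aof (state (take k s)) <= i.
End St.

Lemma take_rcons_lt T (s : seq T) a k : k < size s -> take k (rcons s a) = take k s.
Proof. by move=> hk; rewrite -cats1 take_cat hk. Qed.

Lemma take_rcons_size T (s : seq T) a : take (size s) (rcons s a) = s.
Proof. by rewrite -cats1 take_cat ltnn subnn take0 cats0. Qed.

Lemma take_rcons_eq T (s : seq T) a k : size s = k -> take k (rcons s a) = s.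
Proof. by move=> <-; apply: take_rcons_size. Qed.

Lemma tree_nonmeager F : proper_filter F ->
  (forall T, F_tree F T -> exists b, branch T b /\ F (branch_union b)) -> ~ meager_family F.
Proof.
move=> [hF _] H [N [hN hcov]].
have [hI [hS hC]] := hF.
have hex : forall q : nat * cantor_space * nat, exists p : nat * cantor_space,
    q.2 <= p.1 /\ (forall i, i < q.2 -> p.2 i = q.1.2 i) /\
    forall z, (forall i, i < p.1 -> z i = p.2 i) -> ~ N q.1.1 z.
  by move=> [[j x] L]; apply: nd_avoid.
have [Wf hWf] := choice hex.
have hT : F_tree F (Tm Wf).
  split; first split.
  - by move=> k.
  - move=> s t hst k hk i hi; have := hst k; rewrite size_cat nth_cat take_cat hk.
    by apply => //; rewrite ltn_addr.
  move=> s hs; exists [set i | Aof Wf (state Wf s) <= i]; split; first exact: filt_ge.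
  move=> a ha k; rewrite size_rcons ltnS leq_eqVlt => /predU1P[->|hk] i.
    by rewrite nth_rcons ltnn eqxx take_rcons_size; apply: ha.
  by rewrite nth_rcons hk take_rcons_lt //; apply: hs.
have [b [hb FY]] := H _ hT.
pose st k := state Wf (mkseq b k).
have stS k : st k.+1 = step Wf (st k) (b k) by rewrite /st /state mkseqS foldl_rcons.
pose g k := (st k).1.2.
pose x k := (st k).2.
pose A k := Aof Wf (st k).
have st1 k : (st k).1.1 = k by elim: k => // k IH; rewrite stS /= IH.
have hWk k := hWf (k, x k, g k).
have Ak k : A k = (Wf (k, x k, g k)).1 by rewrite /A /Aof st1.
have gA k : g k <= A k by rewrite Ak; case: (hWk k).
have gS k : g k.+1 = maxn (maxn (A k) (g k).+1) (\max_(j <- b k) j).+1 by rewrite /g stS.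
have gAS k : A k <= g k.+1 by rewrite gS -maxnA leq_maxl.
have gSS k : g k < g k.+1 by rewrite gS (leq_trans _ (leq_maxl _ _)) // leq_maxr.
have bg k i : i \in b k -> i < g k.+1.
  by move=> hi; rewrite gS (leq_trans (fset_max hi)) // leq_maxr.
have gk k : k <= g k by elim: k => // k IH; exact: leq_ltn_trans IH (gSS k).
have xS k i : x k.+1 i = if i < A k then (Wf (k, x k, g k)).2 i else i \in b k.
  by rewrite /x stS /= /Yof /Aof st1 -/(x k) -/(g k) -Ak.
have x1 k i : i < g k -> x k.+1 i = x k i.
  move=> hi; rewrite xS (leq_trans hi (gA k)); case: (hWk k) => _ [h _].
  exact: h.
have gmono k m : k <= m -> g k <= g m.
  move=> /subnK <-; elim: (m - k) => // n IH.
  by rewrite addSn (leq_trans IH) // ltnW.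
have xm k m i : k <= m -> i < g k -> x m i = x k i.
  move=> /subnK <-; elim: (m - k) => // n IH hi.
  by rewrite addSn x1 ?IH // (leq_trans hi) // gmono // leq_addl.
have xx k m i : i < g k -> i < g m -> x k i = x m i.
  move=> h1 h2; case: (leqP k m) => hkm; first by rewrite (xm k m).
  by rewrite (xm m k) // ltnW.
pose Z := [set i | x i.+1 i].
have FZ : F Z.
  apply: hS FY _ => i [k hk]; rewrite /Z /=.
  rewrite (xx i.+1 k.+1 i (gk i.+1) (bg _ _ hk)).
  have hAk : A k <= i.
    have := hb k.+1 k; rewrite size_mkseq => /(_ (ltnSn k) i).
    rewrite nth_mkseq // mkseqS take_rcons_eq ?size_mkseq //.
    by apply.
  by rewrite xS ltnNge hAk.
have [j _ Nj] := hcov (chi Z) (ex_intro2 _ _ Z FZ erefl).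
case: (hWk j) => _ [_ h]; apply: (h (chi Z)) => // i hi.
rewrite /chi asboolb /Z /=.
have hi' : i < A j by rewrite Ak.
rewrite (xx i.+1 j.+1 i (gk i.+1)); first by rewrite xS hi'.
by rewrite (leq_trans hi') // gAS.
Qed.

Fixpoint nnF (Bd : nat * nat -> nat) j :=
  if j is j'.+1 then maxn (nnF Bd j').+1 (Bd (nnF Bd j', j')) else 0.
Fixpoint mF (nx : nat -> nat) k := if k is k'.+1 then nx (mF nx k').+1 else nx 0.

Lemma seqK (a : {fset nat}) : seq_fset tt (a : seq nat) = a.
Proof. by apply/fsetP => x; rewrite seq_fsetE. Qed.

Lemma memb (X : set nat) lo n i :
  (i \in [fset j in iota lo n | `[< X j >]]) = (lo <= i < lo + n) && `[< X i >].
Proof. by rewrite !inE mem_iota. Qed.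

Lemma locate (f : nat -> nat) : (forall k, f k < f k.+1) -> forall i, f 0 <= i ->
  exists k, f k <= i < f k.+1.
Proof.
move=> hf i hi.
suff : forall N, i < f N -> exists k, f k <= i < f k.+1.
  apply; apply: leq_trans (mono_ge hf i.+1); exact: ltnSn.
elim => [|N IH hN]; first by rewrite ltnNge hi.
case: (ltnP i (f N)) => h; first exact: IH.
by exists N; rewrite h.
Qed.

Lemma tree_branch F : proper_filter F -> ~ meager_family F -> P_filter F ->
  forall T, F_tree F T -> exists b, branch T b /\ F (branch_union b).
Proof.
move=> [hF _] nm hP T [[T0 Tpre] hT].
have [hI [hS hC]] := hF.
have hex : forall s, exists X, F X /\ (T s -> forall a : {fset nat},
    (forall x, x \in a -> X x) -> T (rcons s a)).
  move=> s; case: (pselect (T s)) => hs.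
    by have [X [FX hX]] := hT s hs; exists X.
  by exists setT; split => //; exact: filtT hF.
have [f hf] := choice hex.
pose dec (ss : seq (seq nat)) := map (fun l => seq_fset tt l) ss.
pose Xs n := if @choice.unpickle (seq (seq nat)) n is Some ss then f (dec ss) else setT.
have FXs n : F (Xs n).
  by rewrite /Xs; case: (choice.unpickle n) => [ss|]; [case: (hf (dec ss))|exact: filtT hF].
have [X [FX hX]] := hP Xs FXs.
have decK s : dec (map (fun a : {fset nat} => (a : seq nat)) s) = s.
  by elim: s => //= a s IH; rewrite IH; congr (_ :: _); exact: seqK.
have hQ s : exists M, forall i, M <= i -> X i -> f s i.
  have [M hM] := bound_fin (hX (choice.pickle (map (fun a : {fset nat} => (a : seq nat)) s))).
  exists M => i hi Xi; apply: contrapT => nf.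
  move: (hM i); rewrite /Xs choice.pickleK decK => /(_ (conj Xi nf)).
  by rewrite ltnNge hi.
have hmon : forall s M M', M <= M' -> (forall i, M <= i -> X i -> f s i) ->
    (forall i, M' <= i -> X i -> f s i).
  by move=> s M M' hMM' h i hi; apply: h; exact: leq_trans hMM' hi.
have [Bd hBd] := choice (fun p : nat * nat => seq_unif hmon hQ p.2 p.1).
pose nn := nnF Bd.
have nnS j : nn j.+1 = maxn (nn j).+1 (Bd (nn j, j)) by [].
have hmono j : nn j < nn j.+1 by rewrite nnS leq_maxl.
have nnBd j : Bd (nn j, j) <= nn j.+1 by rewrite nnS leq_maxr.
have [W [FW hW]] := nonmeager_blocks hmono nm.
have [nx hnx] := choice hW.
pose m := mF nx.
have mS k : m k.+1 = nx (m k).+1 by [].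
have mmono k : m k < m k.+1 by rewrite mS; case: (hnx (m k).+1).
have mk k : k <= m k := mono_ge mmono k.
pose lo k := nn (m k).+1.
pose hi k := nn (m k.+1).
have lohi k : lo k <= hi k by exact: mono_le hmono _ _ (mmono k).
pose b k := [fset i in iota (lo k) (hi k - lo k) | `[< X i >]].
have hb k i : i \in b k -> [/\ lo k <= i, i < hi k & X i].
  by rewrite memb subnKC // => /andP [/andP [h1 h2] /asboolP h3].
exists b; split.
  elim => [|k IH] //; rewrite mkseqS.
  apply: ((hf (mkseq b k)).2 IH (b k)) => i ib.
  have [hlo hhi Xi] := hb k i ib.
  have := (hBd (nn (m k), m k)) (mkseq b k); rewrite /= size_mkseq => /(_ (mk k)).
  apply => //.
    move=> a /mapP [k' hk' ->] x xb; rewrite mem_iota /= in hk'.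
    have [_ h _] := hb k' x xb; apply: leq_trans h _; apply: mono_le => //.
    exact: mono_le mmono _ _ hk'.
  by apply: leq_trans (nnBd _) hlo.
apply: hS (hI _ _ (hI _ _ FX FW) (filt_ge hF (lo 0))) _ => i [[Xi Wi] hi0].
have lomono k : lo k < lo k.+1.
  rewrite /lo; apply: leq_trans (hmono _) _; apply: mono_le => //; exact: mmono k.
have [k /andP [h1 h2]] := locate lomono hi0.
exists k; rewrite memb subnKC // h1 /=; apply/andP; split; last exact/asboolP.
rewrite ltnNge; apply/negP => hh.
case: (hnx (m k).+1) => _ /(_ i); rewrite -mS; apply => //.
by rewrite hh.
Qed.

Local Close Scope fset_scope.
Local Close Scope classical_set_scope.
Unset Implicit Arguments.

Theorem lemma1p3 (F : set (set nat)) :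
  proper_filter F ->
  ((~ meager_family F /\ P_filter F) <->
   (forall T : set (seq {fset nat}), F_tree F T ->
      exists b : nat -> {fset nat}, branch T b /\ F (branch_union b))).
Proof.
move=> hF; split.
  by move=> [nm hP]; exact: tree_branch.
move=> H; split; [exact: tree_nonmeager | exact: tree_Pfilter].
Qed.
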